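(* Let $p$ be a prime and $a,b$ positive integers. In the $(p^a,p^b)$-game there is a winning sequence of exactly $p^{b p^a}-1$ moves.
   Context: The $(n,m)$-game: $n$ counters at positions $1,\dots,n$ (vertices in cyclic order of a regular $n$-gon table), each showing an element of $\mathbb{Z}_m$; a configuration is a vector in $\mathbb{Z}_m^n$, initially arbitrary and unknown. Each turn the player chooses a move $y\in\mathbb{Z}_m^n$ added coordinatewise, then the table is rotated by an adversarially chosen $k\in\mathbb{Z}_n$, replacing $x$ by $x'$ with $x'_{i+k}=x_i$ (indices mod $n$). The player wins if at some moment (including initially) all counters show $0$. A strategy is a finite sequence of moves; it is winning if it forces the zero configuration at some time for every initial configuration and every choice of rotations. *)

(* Defs.v *)
From mathcomp Require Import all_boot all_algebra.
Set Implicit Arguments. Unset Strict Implicit. Unset Printing Implicit Defensive.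
Import GRing.Theory.
Local Open Scope ring_scope.

(* Positions are 'Z_n (n >= 2 in all uses), counter values are 'Z_m (m >= 2). *)
Definition config (n m : nat) := 'Z_n -> 'Z_m.

Definition zero_config (n m : nat) : config n m := fun _ => 0.

Definition add_config (n m : nat) (x y : config n m) : config n m :=
  fun i => x i + y i.

Definition rotate (n m : nat) (k : 'Z_n) (x : config n m) : config n m :=
  fun j => x (j - k).

(* reaches_zero x s ks : starting at configuration x, playing the moves s in
   order, with the adversary rotating by ks 0, ks 1, ... after each move,
   the zero configuration occurs at some moment (including initially). *)
Fixpoint reaches_zero (n m : nat) (x : config n m) (s : seq (config n m))
    (ks : nat -> 'Z_n) : Prop :=
  x = @zero_config n m \/
  match s with
  | [::] => False
  | y :: s' => @reaches_zero n m (rotate (ks 0%N) (add_config x y)) s' (fun i => ks i.+1)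
  end.

Definition winning (n m : nat) (s : seq (config n m)) : Prop :=
  forall (x : config n m) (ks : nat -> 'Z_n), reaches_zero x s ks.

(* Main.v *)
Require Import Defs.
From mathcomp Require Import all_boot all_algebra zify.
From Stdlib Require Import FunctionalExtensionality.
Set Implicit Arguments. Unset Strict Implicit. Unset Printing Implicit Defensive.
Import GRing.Theory.
Local Open Scope ring_scope.

Fixpoint reachV (V : zmodType) (I : Type) (rot : I -> V -> V) (x : V)
   (s : seq V) (ks : nat -> I) : Prop :=
  x = 0 \/ match s with [::] => False
  | y :: s' => reachV rot (rot (ks 0%N) (x + y)) s' (fun i => ks i.+1) end.

Fixpoint finV (V : zmodType) (I : Type) (rot : I -> V -> V) (x : V)
   (s : seq V) (ks : nat -> I) : V :=
  match s with [::] => x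
  | y :: s' => finV rot (rot (ks 0%N) (x + y)) s' (fun i => ks i.+1) end.

Lemma reachV_cat (V : zmodType) (I : Type) (rot : I -> V -> V) x s t ks :
  reachV rot x s ks \/ reachV rot (finV rot x s ks) t (fun i => ks (size s + i)%N) ->
  reachV rot x (s ++ t) ks.
Proof.
elim: s x ks => [|y s IH] x ks /=.
  by move=> [[hx|[]]|H]; [case: t => [|? ?]; left|exact H].
case=> [[->|H]|H]; first by left.
  by right; apply: IH; left.
by right; apply: IH; right.
Qed.

Definition subg (V : finZmodType) (U : {set V}) :=
  0 \in U /\ forall x y, x \in U -> y \in U -> x - y \in U.

Lemma subgN (V : finZmodType) (U : {set V}) x : subg U -> x \in U -> - x \in U.
Proof. by case=> h0 hB hx; rewrite -sub0r hB. Qed.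

Lemma subgD (V : finZmodType) (U : {set V}) x y : subg U -> x \in U -> y \in U -> x + y \in U.
Proof. by move=> hU hx hy; rewrite -[y]opprK; apply: hU.2 => //; apply: subgN. Qed.

Lemma finV_inv (V : finZmodType) (I : Type) (rot : I -> V -> V) (W U : {set V}) x s ks :
  subg W -> subg U -> U \subset W ->
  (forall k z, z \in W -> rot k z \in W) ->
  (forall k z, z \in W -> rot k z - z \in U) ->
  x \in W -> all (mem U) s ->
  finV rot x s ks \in W /\ finV rot x s ks - x \in U.
Proof.
move=> hW hU sUW hrW hrU.
elim: s x ks => [|y s IH] x ks /= hx.
  by move=> _; rewrite subrr; split => //; case: hU.
case/andP=> hy hs.
have hxy : x + y \in W by apply: subgD => //; apply: (subsetP sUW).
have hx' := hrW (ks 0%N) _ hxy.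
have [h1 h2] := IH (rot (ks 0%N) (x + y)) (fun i => ks i.+1) hx' hs.
split => //.
have -> : finV rot (rot (ks 0%N) (x + y)) s (fun i => ks i.+1) - x =
  (finV rot (rot (ks 0%N) (x + y)) s (fun i => ks i.+1) - rot (ks 0%N) (x + y))
  + ((rot (ks 0%N) (x + y) - (x + y)) + y).
  by rewrite [in RHS]opprD !addrA subrK addrNK.
by apply: subgD => //; apply: subgD => //; apply: hrU.
Qed.

Fixpoint build (V : zmodType) (s : seq V) (r0 : V) (rs : seq V) : seq V :=
  match rs with [::] => s | r1 :: rs' => s ++ (r1 - r0) :: build s r1 rs' end.

Lemma size_build (V : zmodType) (s : seq V) r0 rs :
  (size (build s r0 rs)).+1 = ((size rs).+1 * (size s).+1)%N.
Proof.
elim: rs r0 => [|r1 rs IH] r0 /=; first by rewrite mul1n.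
rewrite size_cat /= -addnS IH; lia.
Qed.

Lemma all_build (V : finZmodType) (W : {set V}) s r0 rs :
  subg W -> all (mem W) s -> r0 \in W -> all (mem W) rs -> all (mem W) (build s r0 rs).
Proof.
move=> hW hs; elim: rs r0 => [|r1 rs IH] r0 //= h0 /andP[h1 hrs].
by rewrite all_cat hs /= IH // andbT; apply: hW.2.
Qed.

Lemma win_build (V : finZmodType) (I : Type) (rot : I -> V -> V) (W U : {set V}) s :
  subg W -> subg U -> U \subset W ->
  (forall k z, z \in W -> rot k z \in W) ->
  (forall k z, z \in W -> rot k z - z \in U) ->
  all (mem U) s -> (forall x ks, x \in U -> reachV rot x s ks) ->
  forall rs r0 x ks, x \in W -> r0 \in W -> all (mem W) rs ->
  (exists2 r, r \in r0 :: rs & x - r0 + r \in U) ->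
  reachV rot x (build s r0 rs) ks.
Proof.
move=> hW hU sUW hrW hrU hs hwin.
elim=> [|r1 rs IH] r0 x ks hx h0 hrs [r hr hxr] /=.
  by move: hr; rewrite inE => /eqP Er; apply: hwin; move: hxr; rewrite Er subrK.
apply: reachV_cat.
move: hr; rewrite inE => /orP[/eqP Er|hr].
  by left; apply: hwin; move: hxr; rewrite Er subrK.
right.
have [hyW hyx] := finV_inv ks hW hU sUW hrW hrU hx hs.
set y := finV rot x s ks in hyW hyx *.
right.
move: hrs => /andP[h1 hrs].
have hd : r1 - r0 \in W by apply: hW.2.
have hyd : y + (r1 - r0) \in W by apply: subgD.
set k := ks (size s + 0)%N.
apply: IH => //; first exact: hrW.
exists r => //.
have -> : rot k (y + (r1 - r0)) - r1 + r =
   (rot k (y + (r1 - r0)) - (y + (r1 - r0))) + (y - x) + (x - r0 + r).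
  by rewrite !opprD !addrA !opprK !subrK (addrAC _ r0 y) addrK (addrAC _ (-r1) y) subrK.
apply: (subgD hU) => //; apply: (subgD hU) => //; exact: hrU.
Qed.

Definition coverb (V : finZmodType) (W U : {set V}) (B : {set V}) :=
  (B \subset W) && [forall x in W, [exists r in B, x + r \in U]].

Lemma card_cover (V : finZmodType) (W U R : {set V}) :
  subg W -> subg U -> U \subset W -> R \subset W ->
  (forall r r', r \in R -> r' \in R -> r - r' \in U -> r = r') ->
  (#|R| * #|U| <= #|W|)%N.
Proof.
move=> hW hU sUW sRW hR.
rewrite -cardsX -(card_in_imset (f := fun rr : V * V => rr.1 + rr.2)).
  apply: subset_leq_card; apply/subsetP => z /imsetP[[r u]].
  rewrite inE /= => /andP[hr hu] ->.
  by apply: subgD => //; [apply: (subsetP sRW) | apply: (subsetP sUW)].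
move=> [r u] [r' u']; rewrite !inE /= => /andP[hr hu] /andP[hr' hu'] E.
have Er : r = r'.
  apply: hR => //.
  have -> : r - r' = u' - u.
    by rewrite -[r](addrK u) E -!addrA (addrC r') !addrA subrK.
  by apply: hU.2.
by move: E; rewrite Er => /addrI ->.
Qed.

Lemma step (V : finZmodType) (I : Type) (rot : I -> V -> V) (W U : {set V}) s :
  subg W -> subg U -> U \subset W ->
  (forall k z, z \in W -> rot k z \in W) ->
  (forall k z, z \in W -> rot k z - z \in U) ->
  all (mem U) s -> (forall x ks, x \in U -> reachV rot x s ks) ->
  ((size s).+1 <= #|U|)%N ->
  exists s', [/\ all (mem W) s', ((size s').+1 <= #|W|)%N &
     forall x ks, x \in W -> reachV rot x s' ks].
Proof.
move=> hW hU sUW hrW hrU hs hwin hsz.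
have cW : coverb W U W.
  rewrite /coverb subxx /=; apply/forall_inP => x hx; apply/exists_inP.
  by exists (- x); [exact: subgN | rewrite subrr; case: hU].
have [R /minsetP[cR minR] sRW] := minset_exists cW.
have {sRW} sRW : R \subset W by case/andP: cR.
have covR : forall x, x \in W -> exists2 r, r \in R & x + r \in U.
  move=> x hx; case/andP: cR => _ /forall_inP/(_ x hx)/exists_inP[r ? ?].
  by exists r.
have pairR : forall r r', r \in R -> r' \in R -> r - r' \in U -> r = r'.
  move=> r r' hr hr' hd; apply/eqP/negP => /negP ne.
  have cB : coverb W U (R :\ r').
    rewrite /coverb (subset_trans _ sRW) ?subsetDl //=.
    apply/forall_inP => x hx; apply/exists_inP.
    have [r'' hr'' hx''] := covR x hx.
    case: (eqVneq r'' r') => [E|ne''].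
      exists r; first by rewrite !inE ne.
      have -> : x + r = (x + r'') + (r - r') by rewrite E addrA (addrAC x r') addrK.
      exact: subgD.
    by exists r''; rewrite // !inE ne''.
  have := minR _ cB (subsetDl _ _) => E.
  by move: hr'; rewrite -E !inE eqxx.
have [r0 hr0] : exists r0, r0 \in R.
  have [r hr _] := covR 0 (proj1 hW); by exists r.
have hen : r0 \in enum R by rewrite mem_enum.
case ER: (enum R) hen => [|q0 rs] // _.
have hq0 : q0 \in R by rewrite -mem_enum ER mem_head.
have allrs : all (mem W) rs.
  apply/allP => r hr; apply: (subsetP sRW); by rewrite -mem_enum ER inE hr orbT.
exists (build s q0 rs); split.
- apply: all_build => //; first by apply/allP => z hz; apply: (subsetP sUW); exact: (allP hs).
  exact: (subsetP sRW).
- rewrite size_build.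
  have cR' : #|R| = (size rs).+1 by rewrite cardE ER.
  apply: leq_trans (card_cover hW hU sUW sRW pairR).
  by rewrite cR' leq_mul2l.
- move=> x ks hx; apply: (win_build hW hU sUW hrW hrU hs hwin) => //.
    exact: (subsetP sRW).
  have hxq : x - q0 \in W by apply: hW.2 => //; exact: (subsetP sRW).
  have [r hr hxr] := covR _ hxq.
  by exists r => //; rewrite -ER mem_enum.
Qed.

Lemma bin_pa_dvd (p a i : nat) : prime p -> (0 < i < p ^ a)%N -> (p %| 'C(p ^ a, i))%N.
Proof.
move=> hp /andP[hi0 hia].
case: i hi0 hia => // i _ hia.
apply/idPn => hnd.
have cop : coprime (p ^ a) 'C(p ^ a, i.+1) by apply: coprimeXl; rewrite prime_coprime.
have h := mul_bin_diag (p ^ a) i.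
have : (p ^ a %| i.+1 * 'C(p ^ a, i.+1))%N by rewrite -h dvdn_mulr.
rewrite Gauss_dvdl // => /dvdn_leq; lia.
Qed.

Lemma nilpD (R : pzRingType) (D : R) (p a b : nat) : prime p ->
  (D + 1) ^+ (p ^ a) = 1 -> (p ^ b)%:R = 0 :> R -> D ^+ (p ^ a * b) = 0.
Proof.
move=> hp hP hpb.
have n_gt0 : (0 < p ^ a)%N by rewrite expn_gt0 prime_gt0.
set n := (p ^ a)%N in hP n_gt0 *.
pose E := \sum_(i < n.-1) D ^+ i.+1 *+ ('C(n, i.+1) %/ p).
have hDn : D ^+ n = - (p%:R * E).
  move: hP; rewrite exprD1n.
  case En : n n_gt0 => [|n'] // _.
  rewrite big_ord_recl big_ord_recr /= expr0 bin0 mulr1n binn mulr1n.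
  move=> h.
  have b0 : forall i, bump 0 i = i.+1 by [].
  have e : p%:R * E = \sum_(i < n') D ^+ bump 0 i *+ 'C(n'.+1, bump 0 i).
    rewrite /E En /= mulr_sumr; apply: eq_bigr => i _.
    rewrite b0 mulr_natl -mulrnA divnK //.
    rewrite -En; apply: bin_pa_dvd => //; rewrite -/n En.
    by have := ltn_ord i; lia.
  rewrite -e b0 in h.
  have h2 : p%:R * E + D ^+ n'.+1 = 0.
    by rewrite -[_ + _](addKr 1) h addNr.
  by apply/eqP; rewrite -addr_eq0 addrC h2.
rewrite exprM hDn exprNn exprMn_comm; last by apply: commr_sym; apply: commr_nat.
by rewrite -natrX hpb mul0r mulr0.
Qed.

Definition Pk (t m : nat) (c : 'I_t.+2) : 'M['Z_m]_t.+2 :=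
  \matrix_(i, j) ((i + c == j)%:R).

Lemma rowPk (t m : nat) (c : 'I_t.+2) (f : 'I_t.+2 -> 'Z_m) :
  (\row_j f j) *m Pk m c = \row_j f (j - c).
Proof.
apply/rowP => j; rewrite !mxE (bigD1 (j - c)) //= !mxE subrK eqxx mulr1.
rewrite big1 ?addr0 // => l hl; rewrite !mxE.
have -> : (l + c == j) = false.
  by apply/negbTE; apply: contra hl => /eqP <-; rewrite addrK.
by rewrite mulr0.
Qed.

Lemma Pk_exp (t m : nat) (i : nat) : Pk m 1 ^+ i = Pk m (i%:R : 'I_t.+2).
Proof.
elim: i => [|i IH].
  by apply/matrixP => a b; rewrite !mxE addr0.
rewrite exprSr IH; apply/matrixP => a b; rewrite !mxE.
rewrite (bigD1 (a + i%:R)) //= !mxE eqxx mul1r big1 ?addr0.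
  by rewrite mulrSr addrA.
move=> l hl; rewrite !mxE.
have -> : (a + i%:R == l) = false by apply/negbTE; rewrite eq_sym.
by rewrite mul0r.
Qed.

Lemma PkE (t m : nat) (k : 'I_t.+2) : Pk m k = Pk m 1 ^+ k.
Proof. by rewrite Pk_exp natr_Zp. Qed.

Lemma Pk_n (t m : nat) : Pk m 1 ^+ t.+2 = 1 :> 'M['Z_m]_t.+2.
Proof.
rewrite Pk_exp (pchar_Zp (p := t.+2)) //.
by apply/matrixP => a b; rewrite !mxE addr0.
Qed.

Lemma natr_mx0 (t m : nat) : (1 < m)%N -> (m%:R : 'M['Z_m]_t.+2) = 0.
Proof.
move=> hm.
have -> : (m%:R : 'M['Z_m]_t.+2) = (m%:R : 'Z_m) *: 1 by rewrite scaler_nat.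
by rewrite pchar_Zp // scale0r.
Qed.

Definition Dm (t m : nat) : 'M['Z_m]_t.+2 := Pk m 1 - 1.
Definition Kset (t m j : nat) : {set 'rV['Z_m]_t.+2} :=
  [set u | u *m Dm t m ^+ j == 0].
Definition rotm (t m : nat) (k : 'I_t.+2) (u : 'rV['Z_m]_t.+2) := u *m Pk m k.

Lemma commPD t m : GRing.comm (Pk m 1) (Dm t m).
Proof. by apply: commrB; [exact: commr_refl | exact: commr1]. Qed.

Lemma subgK t m j : subg (Kset t m j).
Proof.
split; first by rewrite inE mul0mx.
by move=> x y; rewrite !inE mulmxBl => /eqP-> /eqP->; rewrite subrr.
Qed.

Lemma rotK t m j k u : u \in Kset t m j -> rotm k u \in Kset t m j.
Proof.
rewrite !inE /rotm => /eqP hu.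
have c : Pk m k * Dm t m ^+ j = Dm t m ^+ j * Pk m k.
  rewrite PkE; apply: commrX; apply: commr_sym; apply: commrX.
  exact: commr_sym (commPD t m).
by rewrite -mulmxA mulmxE c -mulmxE mulmxA hu mul0mx.
Qed.

Lemma rotKS t m j k u : u \in Kset t m j.+1 -> rotm k u - u \in Kset t m j.
Proof.
rewrite !inE /rotm => /eqP hu.
pose S := \sum_(i < k) (Pk m 1 : 'M['Z_m]_t.+2) ^+ i.
have cS : GRing.comm (Dm t m ^+ j) S.
  apply: commr_sum => i _; apply: commrX; apply: commr_sym; apply: commrX.
  exact: commPD.
have -> : (u *m Pk m k - u) *m Dm t m ^+ j = u *m Dm t m ^+ j.+1 *m S.
  rewrite -{2}[u]mulmx1 -mulmxBr -!mulmxA; congr (u *m _).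
  by rewrite !mulmxE PkE subrX1 -/(Dm t m) -mulrA -cS mulrA -exprS.
by rewrite hu mul0mx.
Qed.

Lemma KS t m j : Kset t m j \subset Kset t m j.+1.
Proof.
by apply/subsetP => u; rewrite !inE exprSr mulmxA => /eqP ->; rewrite mul0mx.
Qed.

Lemma chain t m j : exists s, [/\ all (mem (Kset t m j)) s,
  ((size s).+1 <= #|Kset t m j|)%N &
  forall x ks, x \in Kset t m j -> reachV (@rotm t m) x s ks].
Proof.
elim: j => [|j [s [hs hsz hw]]].
  exists [::]; split => //.
    by apply/card_gt0P; exists 0; rewrite inE mul0mx.
  by move=> x ks; rewrite inE expr0 mulmx1 => /eqP ->; left.
apply: (step (s := s) (subgK t m j.+1) (subgK t m j) (KS t m j)) => //.
- by move=> k z; apply: rotK.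
- by move=> k z; apply: rotKS.
Qed.

Lemma transl (n m : nat) (s : seq 'rV['Z_m]_(Zp_trunc n).+2) (x : config n m) ks :
  reachV (@rotm (Zp_trunc n) m) (\row_j x j) s ks ->
  reaches_zero x (map (fun (u : 'rV['Z_m]_(Zp_trunc n).+2) (j : 'Z_n) => u 0 j) s) ks.
Proof.
have z : forall x : config n m, \row_j x j = 0 -> x = @zero_config n m.
  move=> x0 h; apply: functional_extensionality => j.
  by have := congr1 (fun u : 'rV_ _ => u 0 j) h; rewrite !mxE.
elim: s x ks => [|y s IH] x ks /=.
  by case=> [h|[]]; left; apply: z.
case=> [h|h]; first by left; apply: z.
right; apply: IH.
suff -> : \row_j rotate (ks 0%N) (add_config x (fun j => y 0 j)) j =
          rotm (ks 0%N) (\row_j x j + y) by [].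
have -> : \row_j x j + y = \row_j (x j + y 0 j) by apply/rowP => j; rewrite !mxE.
by rewrite /rotm rowPk.
Qed.

Theorem mainTheorem8 (p a b : nat) (hp : prime p) (ha : (0 < a)%N) (hb : (0 < b)%N) :
  exists s : seq (config (p ^ a) (p ^ b)),
    size s = (p ^ (b * p ^ a) - 1)%N /\ winning s.
Proof.
have p1 : (1 < p)%N by apply: prime_gt1.
have hn : (1 < p ^ a)%N by rewrite -(expn0 p) ltn_exp2l.
have hm : (1 < p ^ b)%N by rewrite -(expn0 p) ltn_exp2l.
have [s [hs hsz hw]] := chain (Zp_trunc (p ^ a)) (p ^ b) (p ^ a * b).
have Dnil : Dm (Zp_trunc (p ^ a)) (p ^ b) ^+ (p ^ a * b) = 0.
  apply: nilpD => //; last exact: natr_mx0.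
  rewrite /Dm subrK -[X in _ ^+ X](Zp_cast hn); exact: Pk_n.
have Kall : Kset (Zp_trunc (p ^ a)) (p ^ b) (p ^ a * b) = setT.
  by apply/setP => u; rewrite !inE Dnil mulmx0 eqxx.
have cardV : #|Kset (Zp_trunc (p ^ a)) (p ^ b) (p ^ a * b)| = (p ^ (b * p ^ a))%N.
  by rewrite Kall cardsT card_mx card_ord (Zp_cast hm) (Zp_cast hn) mul1n expnM.
rewrite cardV in hsz.
set T := (p ^ (b * p ^ a) - 1)%N.
have sT : (size s <= T)%N by rewrite /T; lia.
exists (map (fun (u : 'rV['Z_(p ^ b)]_(Zp_trunc (p ^ a)).+2) (j : 'Z_(p ^ a)) => u 0 j) (s ++ nseq (T - size s) 0)); split.
  by rewrite size_map size_cat size_nseq subnKC.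
move=> x ks; apply: transl; apply: reachV_cat; left; apply: hw.
by rewrite Kall inE.
Qed.
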